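(* Let $w\in\mathcal S_n$. Then $\Gamma(a_{\min},(x,y,z))=0$ and $\Gamma(a_{\max},(x,y,z))=1$ for every triple $(x,y,z)\in\mathrm T_w$.
   Context: Permutations are in one-line notation; $\mathrm{Des}(u)=\{i: u_i>u_{i+1}\}$. A word $a=a_1\cdots a_\ell$ with letters in $\{1,\dots,n-1\}$ acts on a word of length $n$ by successively swapping the entries in positions $a_j$ and $a_j+1$. $\mathrm R(w)$ is the set of reduced words of $w$ (words of length $\ell(w)$, the number of inversions, whose action on $12\cdots n$ yields $w$). The word $a_{\min}$ (resp. $a_{\max}$) is defined as follows: set $w^0=w$; for $j=0,1,\dots,\ell(w)-1$ let $i_j$ be the smallest (resp. largest) element of $\mathrm{Des}(w^j)$ and let $w^{j+1}$ be obtained from $w^j$ by swapping the entries in positions $i_j$ and $i_j+1$; then $w^{\ell(w)}=12\cdots n$ and $a_{\min}$ (resp. $a_{\max}$) is the reduced word $i_{\ell(w)-1}\cdots i_1 i_0$. For $a\in\mathrm R(w)$ and an inversion $(p,q)$ of $w$ ($p>q$, $p$ left of $q$ in $w$), $P_a(p,q)$ is the index of the step of $a$ at which $p$ and $q$ are swapped. $\mathrm T_w$ is the set of triples $(x,y,z)$, $x<y<z$, with $z,y,x$ appearing in this order in $w$. $\Gamma(a,(x,y,z))=1$ if $P_a(y,x)>P_a(z,y)$ and $0$ otherwise. *)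

(* Defs.v *)
(* Permutations of {1..n} in one-line notation as seq nat. *)
From mathcomp Require Import all_boot.
Set Implicit Arguments. Unset Strict Implicit. Unset Printing Implicit Defensive.

(* Positions are 1-indexed: position p holds nth 0 u p.-1. *)

(* swap the entries in positions i and i+1 (1 <= i) *)
Definition swap_at (u : seq nat) (i : nat) : seq nat :=
  [seq nth 0 u (if k == i.-1 then i else if k == i then i.-1 else k)
  | k <- iota 0 (size u)].

Definition act (a : seq nat) (u : seq nat) : seq nat := foldl swap_at u a.

Definition idw (n : nat) : seq nat := iota 1 n.

Definition ninv (w : seq nat) : nat :=
  sumn [seq count (fun j => (i < j) && (nth 0 w j < nth 0 w i)) (iota 0 (size w))
       | i <- iota 0 (size w)].

Definition Des (u : seq nat) : seq nat :=
  [seq i <- iota 1 (size u).-1 | nth 0 u i < nth 0 u i.-1].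

Definition min_des (u : seq nat) : nat := head 0 (Des u).
Definition max_des (u : seq nat) : nat := last 0 (Des u).

Fixpoint sort_steps (pick : seq nat -> nat) (fuel : nat) (u : seq nat) : seq nat :=
  match fuel with
  | 0 => [::]
  | k.+1 => let i := pick u in i :: sort_steps pick k (swap_at u i)
  end.

Definition a_min (w : seq nat) : seq nat := rev (sort_steps min_des (ninv w) w).
Definition a_max (w : seq nat) : seq nat := rev (sort_steps max_des (ninv w) w).

(* the pair of values swapped at step j+1 (0-based j) of a acting on 12...n *)
Definition step_pair (n : nat) (a : seq nat) (j : nat) : nat * nat :=
  let u := act (take j a) (idw n) in
  let i := nth 0 a j in (nth 0 u i.-1, nth 0 u i).

(* P_a(p,q): (1-based) index of the step of a at which p and q are swapped *)
Definition P (n : nat) (a : seq nat) (p q : nat) : nat :=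
  (find (fun j => (step_pair n a j == (p, q)) || (step_pair n a j == (q, p)))
        (iota 0 (size a))).+1.

Definition inT (w : seq nat) (x y z : nat) : bool :=
  [&& x < y, y < z, x \in w, y \in w, z \in w,
      index z w < index y w & index y w < index x w].

Definition Gamma (n : nat) (a : seq nat) (x y z : nat) : nat :=
  if P n a z y < P n a y x then 1 else 0.

(* Main.v *)
Require Import Defs.
From mathcomp Require Import all_boot zify.
Set Implicit Arguments. Unset Strict Implicit.

Definition sg (i k : nat) := if k == i.-1 then i else if k == i then i.-1 else k.

Lemma sgK i k : sg i (sg i k) = k.
Proof. rewrite /sg; do ! (case: eqP => /=); lia. Qed.

Lemma sg_lt i k N : i < N -> k < N -> sg i k < N.
Proof. rewrite /sg; do ! (case: eqP => /=); lia. Qed.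

Lemma size_swap u i : size (swap_at u i) = size u.
Proof. by rewrite /swap_at size_map size_iota. Qed.

Lemma nth_swap u i k : k < size u -> nth 0 (swap_at u i) k = nth 0 u (sg i k).
Proof. by move=> hk; rewrite /swap_at (nth_map 0) ?size_iota // nth_iota. Qed.

Lemma swap0 u : swap_at u 0 = u.
Proof.
apply: (@eq_from_nth _ 0); rewrite ?size_swap // => k hk.
rewrite nth_swap // /sg /=; by case: k hk.
Qed.

Lemma swapK u i : i < size u -> swap_at (swap_at u i) i = u.
Proof.
move=> hi; apply: (@eq_from_nth _ 0); rewrite ?size_swap // => k hk.
by rewrite nth_swap ?size_swap // nth_swap ?sgK // sg_lt.
Qed.

Lemma mem_swap1 u i x : i < size u -> x \in swap_at u i -> x \in u.
Proof.
move=> hi /mapP [k]; rewrite mem_iota => /andP [_ hk] ->.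
by apply: mem_nth; apply: sg_lt.
Qed.

Lemma mem_swap u i x : i < size u -> (x \in swap_at u i) = (x \in u).
Proof.
move=> hi; apply/idP/idP; first exact: mem_swap1.
rewrite -{1}(swapK hi); apply: mem_swap1; by rewrite size_swap.
Qed.

Lemma swap_uniq u i : i < size u -> uniq u -> uniq (swap_at u i).
Proof.
move=> hi hu; rewrite /swap_at map_inj_in_uniq ?iota_uniq //.
move=> a b; rewrite !mem_iota !add0n => /andP [_ ha] /andP [_ hb] /eqP.
rewrite nth_uniq ?sg_lt // => /eqP h.
by rewrite -(sgK i a) -(sgK i b); congr sg; exact: h.
Qed.

Lemma index_swap u i p : i < size u -> uniq u -> p \in u ->
  index p (swap_at u i) = sg i (index p u).
Proof.
move=> hi hu hp.
have hm : index p u < size u by rewrite index_mem.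
have e : nth 0 (swap_at u i) (sg i (index p u)) = p.
  by rewrite nth_swap ?sg_lt // sgK nth_index.
by rewrite -{1}e index_uniq ?size_swap ?sg_lt ?swap_uniq.
Qed.

Lemma count_big (T : Type) (P : pred T) s : count P s = \sum_(x <- s) P x.
Proof. by elim: s => [|x s IH]; rewrite ?big_nil ?big_cons //= IH. Qed.

Lemma iota_ord (F : nat -> nat) N : \sum_(i <- iota 0 N) F i = \sum_(i < N) F i.
Proof. by have := @big_mkord nat 0 addn N xpredT F; rewrite /index_iota subn0 => <-. Qed.

Definition G u (a b : nat) : nat := (a < b) && (nth 0 u b < nth 0 u a).

Lemma ninvE u : ninv u = \sum_(p : 'I_(size u) * 'I_(size u)) G u p.1 p.2.
Proof.
rewrite -(pair_bigA _ (fun a b : 'I_(size u) => G u a b)) /=.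
rewrite /ninv sumnE big_map iota_ord.
apply: eq_bigr => a _; by rewrite count_big iota_ord.
Qed.

Lemma ninv_swap u i : i \in Des u -> ninv (swap_at u i) < ninv u.
Proof.
rewrite mem_filter mem_iota => /andP [hd /andP [hl1 hl2]].
set N := size u.
have hi : i < N by lia.
rewrite !ninvE size_swap -/N.
pose h (a : 'I_N) : 'I_N := Ordinal (sg_lt hi (ltn_ord a)).
have hinj : injective h.
  move=> a b /(congr1 val) /= e; apply: val_inj => /=.
  by rewrite -(sgK i a) -(sgK i b) e.
pose h2 (p : 'I_N * 'I_N) := (h p.1, h p.2).
have h2inj : injective h2.
  move=> [a b] [c d] [] e1 e2.
  have -> : a = c by apply: hinj; apply: val_inj.
  have -> : b = d by apply: hinj; apply: val_inj.
  done.
rewrite (reindex_inj h2inj) /=.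
have hp : i.-1 < N by lia.
pose p0 : 'I_N * 'I_N := (Ordinal hp, Ordinal hi).
rewrite (bigD1 p0) // [X in _ < X](bigD1 p0) //=.
have le : forall p : 'I_N * 'I_N, G (swap_at u i) (sg i p.1) (sg i p.2) <= G u p.1 p.2.
  move=> [[a ha0] [b hb0]] /=; have ha := sg_lt hi ha0; have hb := sg_lt hi hb0.
  rewrite /G !nth_swap // !sgK.
  case: (ltnP (sg i a) (sg i b)) => //= hab; case: ltnP => //= hlt.
  case: ltnP => //= hab2.
  move: hab hab2 hlt hd; rewrite /sg; do ! (case: eqP => /= ? ); subst; try lia.
have e1 : sg i i.-1 = i by rewrite /sg eqxx.
have e2 : sg i i = i.-1 by rewrite /sg eqxx; case: eqP => //; lia.
have -> : G (swap_at u i) (sg i i.-1) (sg i i) = 0.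
  rewrite e1 e2 /G; have -> : (i < i.-1) = false by lia. done.
have -> : G u i.-1 i = 1.
  rewrite /G hd; case: ltnP => //; lia.
rewrite add0n add1n ltnS; apply: leq_sum => p _; exact: le.
Qed.

Lemma memDes v i : (i \in Des v) = [&& 0 < i, i < size v & nth 0 v i < nth 0 v i.-1].
Proof. rewrite mem_filter mem_iota; apply/andP/and3P => [[h /andP[h1 h2]]|[h1 h2 h]]; split => //; lia. Qed.

Lemma Des_sorted v : sorted leq (Des v).
Proof. apply: sorted_filter; first exact: leq_trans. exact: iota_sorted. Qed.

Lemma min_des_mem v : min_des v \in 0 :: Des v.
Proof. rewrite /min_des; case: (Des v) => [|x s] /=; by rewrite !inE ?eqxx ?orbT. Qed.

Lemma max_des_mem v : max_des v \in 0 :: Des v.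
Proof. exact: mem_last. Qed.

Lemma min_des_nz v : Des v != [::] -> min_des v != 0.
Proof.
rewrite /min_des; case E: (Des v) => [|x s] //= _.
have : x \in Des v by rewrite E inE eqxx.
by rewrite memDes; case: x {E} => [|x] //.
Qed.

Lemma max_des_nz v : Des v != [::] -> max_des v != 0.
Proof.
move=> h; have := max_des_mem v; rewrite inE => /orP [/eqP e|].
  move: h; rewrite /max_des in e *; case/lastP E: (Des v) => [|s x] //= _.
  have : x \in Des v by rewrite E mem_rcons inE eqxx.
  by rewrite E last_rcons in e; rewrite memDes e.
by rewrite memDes; case: (max_des v).
Qed.

Lemma min_des_le v m : m \in Des v -> min_des v <= m.
Proof.
move=> hm; rewrite /min_des -nth0 -(nth_index 0 hm).
apply: (sorted_leq_nth leq_trans leqnn 0 (Des_sorted v)) => //.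
  by rewrite inE; case: (Des v) hm.
by rewrite inE index_mem.
Qed.

Lemma max_des_ge v m : m \in Des v -> m <= max_des v.
Proof.
move=> hm; rewrite /max_des -nth_last -(nth_index 0 hm).
have hs : 0 < size (Des v) by case: (Des v) hm.
apply: (sorted_leq_nth leq_trans leqnn 0 (Des_sorted v)).
- by rewrite inE index_mem.
- by rewrite inE; lia.
- have := index_mem m (Des v); rewrite hm => h; by rewrite -ltnS prednK.
Qed.

Lemma noDes_sorted v : Des v = [::] -> sorted leq v.
Proof.
move=> h; apply/(sortedP 0) => i hi.
have : i.+1 \notin Des v by rewrite h.
rewrite memDes /= hi /=; lia.
Qed.

Lemma noDes_id n v : perm_eq v (idw n) -> Des v = [::] -> v = idw n.
Proof.
move=> hp hd; apply: (sorted_eq leq_trans anti_leq) => //.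
  exact: noDes_sorted.
exact: iota_sorted.
Qed.

Definition pick_ok (pick : seq nat -> nat) :=
  (forall v, pick v \in 0 :: Des v) /\ (forall v, Des v != [::] -> pick v != 0).

Lemma min_ok : pick_ok min_des.
Proof. split; [exact: min_des_mem | exact: min_des_nz]. Qed.
Lemma max_ok : pick_ok max_des.
Proof. split; [exact: max_des_mem | exact: max_des_nz]. Qed.

Definition step pick (u : seq nat) := swap_at u (pick u).
Definition st pick w k := iter k (step pick) w.

Lemma pick_lt pick v : pick_ok pick -> 0 < size v -> pick v < size v.
Proof.
move=> [h1 _] hs; have := h1 v; rewrite inE => /orP [/eqP -> //|].
by rewrite memDes => /and3P [].
Qed.

Lemma pick_cases pick v : pick_ok pick ->
  pick v = 0 /\ Des v = [::] \/ pick v \in Des v.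
Proof.
move=> [h1 h2]; have := h1 v; rewrite inE => /orP [/eqP e|]; last by right.
left; split => //; case E: (Des v) => //; have := h2 v; rewrite E e; by move/(_ isT).
Qed.

Lemma perm_swap u i : i < size u -> uniq u -> perm_eq (swap_at u i) u.
Proof.
move=> hi hu; apply: uniq_perm; rewrite ?swap_uniq // => x; exact: mem_swap.
Qed.

Lemma step_perm pick n v : pick_ok pick -> 0 < n -> perm_eq v (idw n) ->
  perm_eq (step pick v) (idw n).
Proof.
move=> hp hn hv; apply: (perm_trans _ hv); apply: perm_swap.
  apply: pick_lt => //; by rewrite (perm_size hv) size_iota.
by rewrite (perm_uniq hv) iota_uniq.
Qed.

Lemma st_perm pick n w k : pick_ok pick -> 0 < n -> perm_eq w (idw n) ->
  perm_eq (st pick w k) (idw n).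
Proof.
move=> hp hn hw; elim: k => [|k IH] //=; exact: step_perm.
Qed.

Lemma iter_fix pick v k : pick_ok pick -> Des v = [::] -> iter k (step pick) v = v.
Proof.
move=> hp hd; elim: k => [|k IH] //=; rewrite IH /step.
case: (pick_cases v hp) => [[-> _]|]; first exact: swap0.
by rewrite hd.
Qed.

Lemma terminate pick n k v : pick_ok pick -> 0 < n -> perm_eq v (idw n) ->
  ninv v <= k -> iter k (step pick) v = idw n.
Proof.
move=> hp hn; elim: k v => [|k IH] v hv hk.
  case: (pick_cases v hp) => [[_ hd]|hd]; first by rewrite (noDes_id hv hd).
  have := ninv_swap hd; lia.
case: (pick_cases v hp) => [[_ hd]|hd].
  by rewrite iter_fix // (noDes_id hv hd).
rewrite iterSr; apply: IH; first exact: step_perm.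
have := ninv_swap hd; rewrite /step; lia.
Qed.

Lemma size_steps pick L u : size (sort_steps pick L u) = L.
Proof. by elim: L u => [|L IH] u //=; rewrite IH. Qed.

Lemma nth_steps pick L u k : k < L ->
  nth 0 (sort_steps pick L u) k = pick (iter k (step pick) u).
Proof.
elim: L u k => [|L IH] u [|k] //= hk.
by rewrite IH // -iterSr.
Qed.

Definition apick pick w := rev (sort_steps pick (ninv w) w).

Lemma size_st pick n w k : pick_ok pick -> 0 < n -> perm_eq w (idw n) ->
  size (st pick w k) = n.
Proof. move=> hp hn hw; by rewrite (perm_size (st_perm k hp hn hw)) size_iota. Qed.

Lemma nth_apick pick w j : j < ninv w ->
  nth 0 (apick pick w) j = pick (st pick w (ninv w - j.+1)).
Proof.
move=> hj; rewrite /apick nth_rev size_steps // nth_steps //; lia.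
Qed.

Lemma act_take pick n w j : pick_ok pick -> 0 < n -> perm_eq w (idw n) ->
  j <= ninv w -> act (take j (apick pick w)) (idw n) = st pick w (ninv w - j).
Proof.
move=> hp hn hw; elim: j => [|j IH] hj.
  by rewrite take0 subn0 /act /= /st (terminate (n:=n)).
rewrite (take_nth 0); last by rewrite size_rev size_steps.
rewrite /act foldl_rcons -/(act _ _) IH; last lia.
rewrite nth_apick //.
have -> : ninv w - j = (ninv w - j.+1).+1 by lia.
rewrite /st iterS -/(st pick w _) /step swapK //.
apply: pick_lt => //; by rewrite (size_st _ hp hn hw).
Qed.

Lemma step_pair_eq pick n w j : pick_ok pick -> 0 < n -> perm_eq w (idw n) ->
  j < ninv w ->
  let v := st pick w (ninv w - j.+1) in
  step_pair n (apick pick w) j = (nth 0 v (pick v), nth 0 v (pick v).-1).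
Proof.
move=> hp hn hw hj v; rewrite /step_pair act_take //; last lia.
have -> : ninv w - j = (ninv w - j.+1).+1 by lia.
rewrite /st iterS -/(st pick w _) -/v nth_apick // -/v /step.
have hs : size v = n by rewrite /v (size_st _ hp hn hw).
have hi : pick v < size v by apply: pick_lt => //; rewrite hs.
rewrite !nth_swap //; last lia.
rewrite /sg eqxx; congr pair.
case: eqP => [e|_]; last by rewrite eqxx.
by rewrite -e.
Qed.

Lemma sg_flip i A B : 0 < i -> A < B -> sg i B < sg i A -> A = i.-1 /\ B = i.
Proof. rewrite /sg; do ! (case: eqP => /= ?); lia. Qed.

Lemma st_uniq pick n w k : pick_ok pick -> 0 < n -> perm_eq w (idw n) ->
  uniq (st pick w k).
Proof. move=> hp hn hw; by rewrite (perm_uniq (st_perm k hp hn hw)) iota_uniq. Qed.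

Lemma st_mem pick n w k x : pick_ok pick -> 0 < n -> perm_eq w (idw n) ->
  (x \in st pick w k) = (x \in w).
Proof. move=> hp hn hw; by rewrite (perm_mem (st_perm k hp hn hw)) (perm_mem hw). Qed.

Lemma keep1 pick v p q : pick_ok pick -> uniq v -> p \in v -> q \in v -> p < q ->
  index p v < index q v -> index p (step pick v) < index q (step pick v).
Proof.
move=> hp hu hpv hqv hpq hlt; rewrite /step.
case: (pick_cases v hp) => [[-> _]|hd]; first by rewrite swap0.
have hi : pick v < size v by move: hd; rewrite memDes => /and3P [].
rewrite !index_swap //.
case: (ltngtP (sg (pick v) (index p v)) (sg (pick v) (index q v))) => // h.
  have i0 : 0 < pick v by move: hd; rewrite memDes => /and3P [].
  have [e1 e2] := sg_flip i0 hlt h.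
  move: hd; rewrite memDes => /and3P [_ _].
  by rewrite -e1 -e2 !nth_index //; lia.
have : index p v = index q v by rewrite -(sgK (pick v) (index p v)) h sgK.
move=> e; lia.
Qed.

Lemma keep pick n w k d p q : pick_ok pick -> 0 < n -> perm_eq w (idw n) ->
  p \in w -> q \in w -> p < q ->
  index p (st pick w k) < index q (st pick w k) ->
  index p (st pick w (d + k)) < index q (st pick w (d + k)).
Proof.
move=> hp hn hw hpw hqw hpq h; elim: d => [|d IH] //.
rewrite addSn /st iterS -/(st _ _ _); apply: keep1 => //.
- exact: (st_uniq _ hp hn hw).
- by rewrite (st_mem _ _ hp hn hw).
- by rewrite (st_mem _ _ hp hn hw).
Qed.

Lemma discrete (f : nat -> bool) L : ~~ f 0 -> f L -> exists k, k < L /\ ~~ f k /\ f k.+1.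
Proof.
elim: L => [|L IH] h0 hL; first by rewrite hL in h0.
case E: (f L); first by have [k [? ?]] := IH h0 E; exists k; split => //; lia.
by exists L; rewrite E.
Qed.

Lemma index_idw n (x : nat) : x \in idw n -> index x (idw n) = x.-1.
Proof.
rewrite mem_iota => /andP [h1 h2].
have hx : x.-1 < n by lia.
have e : nth 0 (idw n) x.-1 = x by rewrite nth_iota //; lia.
by rewrite -{1}e index_uniq ?size_iota ?iota_uniq.
Qed.

Lemma flip pick n w p q : pick_ok pick -> 0 < n -> perm_eq w (idw n) ->
  p \in w -> q \in w -> p < q -> index q w < index p w ->
  exists k, k < ninv w /\
    let v := st pick w k in nth 0 v (pick v) = p /\ nth 0 v (pick v).-1 = q.
Proof.
move=> hp hn hw hpw hqw hpq hqp.
pose f k := index p (st pick w k) < index q (st pick w k).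
have [k [hk [h1 h2]]] : exists k, k < ninv w /\ ~~ f k /\ f k.+1.
  apply: discrete; first by rewrite /f /= -leqNgt ltnW.
  rewrite /f /st (terminate (n:=n)) // !index_idw -?(perm_mem hw) //.
  move: hpw hqw; rewrite (perm_mem hw) !mem_iota; lia.
exists k; split => // v.
have hu : uniq v by exact: (st_uniq _ hp hn hw).
have hpv : p \in v by rewrite (st_mem _ _ hp hn hw).
have hqv : q \in v by rewrite (st_mem _ _ hp hn hw).
move: h1 h2; rewrite /f /st iterS -/(st _ _ _) -/v /step => h1.
case: (pick_cases v hp) => [[-> _]|hd]; first by rewrite swap0 (negbTE h1).
have hi : pick v < size v by move: hd; rewrite memDes => /and3P [].
have i0 : 0 < pick v by move: hd; rewrite memDes => /and3P [].
rewrite !index_swap // => h2.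
have hne : index q v != index p v.
  apply/eqP => e; have : q = p by rewrite -(nth_index 0 hqv) e nth_index.
  lia.
have hlt : index q v < index p v by rewrite ltn_neqAle hne leqNgt.
have [e1 e2] := sg_flip i0 hlt h2.
by rewrite -e1 -e2 !nth_index.
Qed.

Lemma prefix_mono v (c m : nat) : min_des v < size v -> m < min_des v -> c <= m ->
  nth 0 v c <= nth 0 v m.
Proof.
move=> hs; elim: m => [|m IH] hm hc; first by have -> : c = 0 by lia.
case: (ltngtP c m.+1) => [hcm||->] //; last lia.
have := IH (ltnW hm) (hcm : c <= m).
have : m.+1 \notin Des v by apply/negP => /min_des_le; lia.
rewrite memDes /= => h; have hh : m.+1 < size v by lia.
rewrite hh /= -leqNgt in h; lia.
Qed.

Lemma suffix_mono v (c m : nat) : m < size v -> max_des v <= c -> c <= m ->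
  nth 0 v c <= nth 0 v m.
Proof.
move=> hs; elim: m hs => [|m IH] hs hm hc; first by have -> : c = 0 by lia.
case: (ltngtP c m.+1) => [hcm||->] //; last lia.
have := IH (ltnW hs) hm (hcm : c <= m).
have : m.+1 \notin Des v by apply/negP => /max_des_ge; lia.
rewrite memDes /= hs /= -leqNgt; lia.
Qed.

Lemma match_pair pick v (p q : nat) : pick_ok pick -> p < q ->
  ((nth 0 v (pick v), nth 0 v (pick v).-1) == (p, q)) ||
  ((nth 0 v (pick v), nth 0 v (pick v).-1) == (q, p)) ->
  [/\ nth 0 v (pick v) = p, nth 0 v (pick v).-1 = q & pick v \in Des v].
Proof.
move=> hp hpq; case: (pick_cases v hp) => [[-> _]|hd] /=.
  rewrite !xpair_eqE => /orP [] /andP [/eqP -> /eqP]; lia.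
have hlt : nth 0 v (pick v) < nth 0 v (pick v).-1 by move: (hd); rewrite memDes => /and3P [].
rewrite !xpair_eqE => /orP [] /andP [/eqP e1 /eqP e2].
  by split.
lia.
Qed.

Lemma find_lt (a1 a2 : pred nat) N j0 : j0 < N -> a1 j0 ->
  (forall j, j < N -> a2 j -> j0 < j) -> find a1 (iota 0 N) < find a2 (iota 0 N).
Proof.
move=> hj0 ha1 ha2.
have f1 : find a1 (iota 0 N) <= j0.
  rewrite leqNgt; apply/negP => h; have := before_find 0 h.
  by rewrite nth_iota // ha1.
suff : j0 < find a2 (iota 0 N) by lia.
rewrite ltnNge; apply/negP => h.
have hf : find a2 (iota 0 N) < N by lia.
have hh : has a2 (iota 0 N) by rewrite has_find size_iota.
have := nth_find 0 hh; rewrite nth_iota // add0n => /(ha2 _ hf); lia.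
Qed.

Lemma P_eq pick n w (p q : nat) : P n (apick pick w) p q =
  (find (fun j => (step_pair n (apick pick w) j == (p, q)) ||
                  (step_pair n (apick pick w) j == (q, p))) (iota 0 (ninv w))).+1.
Proof. by rewrite /P size_rev size_steps. Qed.

Lemma idx_pos pick n w k (p q : nat) : pick_ok pick -> 0 < n -> perm_eq w (idw n) ->
  let v := st pick w k in
  nth 0 v (pick v) = p -> nth 0 v (pick v).-1 = q -> pick v \in Des v ->
  index p v = pick v /\ index q v = (pick v).-1.
Proof.
move=> hp hn hw v e1 e2 hd.
have hu : uniq v by exact: (st_uniq _ hp hn hw).
have hi : pick v < size v by move: hd; rewrite memDes => /and3P [].
have hi0 : 0 < pick v by move: hd; rewrite memDes => /and3P [].
split; rewrite -?e1 -?e2 index_uniq //; exact: leq_ltn_trans (leq_pred _) hi.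
Qed.

Lemma later pick n w k0 (r s : nat) : k0 < ninv w -> pick_ok pick -> 0 < n -> perm_eq w (idw n) ->
  r \in w -> s \in w -> r < s ->
  index r (st pick w k0) < index s (st pick w k0) ->
  forall j, j < ninv w ->
  (step_pair n (apick pick w) j == (s, r)) || (step_pair n (apick pick w) j == (r, s)) ->
  ninv w - k0.+1 < j.
Proof.
move=> hk0 hp hn hw hr hs hrs hord j hj.
rewrite (step_pair_eq hp hn hw hj) orbC.
set k := ninv w - j.+1; set v := st pick w k.
move/(match_pair hp hrs) => [e1 e2 hd].
have [i1 i2] := idx_pos hp hn hw e1 e2 hd.
case: (ltnP k k0) => hk; first by move: hk; rewrite /k; lia.
have := keep (k - k0) hp hn hw hr hs hrs hord.
rewrite subnK // i1 i2; lia.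
Qed.

Lemma gamma_min n w x y z : perm_eq w (idw n) -> inT w x y z ->
  Gamma n (a_min w) x y z = 0.
Proof.
move=> hw /and5P [hxy hyz hx hy /and3P [hz hzy hyx]].
have hn : 0 < n by rewrite -(size_iota 1 n) -(perm_size hw); case: (w) hx.
have hp := min_ok.
have [k0 [hk0 /= [e1 e2]]] := flip hp hn hw hx hy hxy hyx.
set v := st min_des w k0 in e1 e2.
have hd : min_des v \in Des v.
  case: (pick_cases v hp) => [[h0 _]|//]; move: e1 e2; rewrite h0 /= => -> ; lia.
have [i1 i2] := idx_pos hp hn hw e1 e2 hd.
rewrite -/v in i1 i2.
have hu : uniq v by exact: (st_uniq _ hp hn hw).
have hzv : z \in v by rewrite (st_mem _ _ hp hn hw).
have hlt : min_des v < size v by move: hd; rewrite memDes => /and3P [].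
have hord : index y v < index z v.
  set c := index z v.
  have hc : c < size v by rewrite index_mem.
  have ec : nth 0 v c = z by rewrite nth_index.
  have c1 : c != min_des v by apply/eqP => e; move: ec; rewrite e e1; lia.
  have c2 : c != (min_des v).-1 by apply/eqP => e; move: ec; rewrite e e2; lia.
  rewrite i2; case: (ltnP c (min_des v).-1) => hc2; last first.
    move: c1 c2 hc2; rewrite !neq_ltn; lia.
  have := prefix_mono (c:=c) hlt (m:=(min_des v).-1); rewrite ec e2.
  move=> h; have := h ltac:(lia) ltac:(lia); lia.
rewrite /Gamma /a_min -/(apick min_des w) !P_eq.
suff : find (fun j => (step_pair n (apick min_des w) j == (y, x)) ||
                  (step_pair n (apick min_des w) j == (x, y))) (iota 0 (ninv w)) <
       find (fun j => (step_pair n (apick min_des w) j == (z, y)) ||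
                  (step_pair n (apick min_des w) j == (y, z))) (iota 0 (ninv w)).
  by move=> h; rewrite ltnS ltnNge ltnW.
apply: (find_lt (j0 := ninv w - k0.+1)); first lia.
  rewrite (step_pair_eq hp hn hw); last lia.
  have -> : ninv w - (ninv w - k0.+1).+1 = k0 by lia.
  by rewrite -/v e1 e2 eqxx orbT.
exact: (later hk0 hp hn hw hy hz hyz hord).
Qed.

Lemma gamma_max n w x y z : perm_eq w (idw n) -> inT w x y z ->
  Gamma n (a_max w) x y z = 1.
Proof.
move=> hw /and5P [hxy hyz hx hy /and3P [hz hzy hyx]].
have hn : 0 < n by rewrite -(size_iota 1 n) -(perm_size hw); case: (w) hx.
have hp := max_ok.
have [k0 [hk0 /= [e1 e2]]] := flip hp hn hw hy hz hyz hzy.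
set v := st max_des w k0 in e1 e2.
have hd : max_des v \in Des v.
  case: (pick_cases v hp) => [[h0 _]|//]; move: e1 e2; rewrite h0 /= => -> ; lia.
have [i1 i2] := idx_pos hp hn hw e1 e2 hd.
rewrite -/v in i1 i2.
have hu : uniq v by exact: (st_uniq _ hp hn hw).
have hxv : x \in v by rewrite (st_mem _ _ hp hn hw).
have hord : index x v < index y v.
  set c := index x v.
  have hc : c < size v by rewrite index_mem.
  have ec : nth 0 v c = x by rewrite nth_index.
  have c1 : c != max_des v by apply/eqP => e; move: ec; rewrite e e1; lia.
  have c2 : c != (max_des v).-1 by apply/eqP => e; move: ec; rewrite e e2; lia.
  rewrite i1; case: (ltnP c (max_des v)) => hc2 //.
  have := suffix_mono (c:=max_des v) (m:=c) hc; rewrite ec e1.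
  move=> h; have := h ltac:(lia) ltac:(lia); lia.
rewrite /Gamma /a_max -/(apick max_des w) !P_eq.
suff h : find (fun j => (step_pair n (apick max_des w) j == (z, y)) ||
                  (step_pair n (apick max_des w) j == (y, z))) (iota 0 (ninv w)) <
       find (fun j => (step_pair n (apick max_des w) j == (y, x)) ||
                  (step_pair n (apick max_des w) j == (x, y))) (iota 0 (ninv w)).
  by rewrite ltnS h.
apply: (find_lt (j0 := ninv w - k0.+1)); first lia.
  rewrite (step_pair_eq hp hn hw); last lia.
  have -> : ninv w - (ninv w - k0.+1).+1 = k0 by lia.
  by rewrite -/v e1 e2 eqxx orbT.
exact: (later hk0 hp hn hw hx hy hxy hord).
Qed.

Theorem mainTheorem5 (n : nat) (w : seq nat) :
  perm_eq w (idw n) ->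
  forall x y z : nat, inT w x y z ->
    Gamma n (a_min w) x y z = 0 /\ Gamma n (a_max w) x y z = 1.
Proof.
move=> hw x y z hT; split; [exact: gamma_min | exact: gamma_max].
Qed.
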